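(* Let $w,n,g$ be positive integers with $w\le n$, let $a$ be the remainder of $n$ divided by $w$, and suppose $ga<w$. Suppose that $r:=\binom{n}{w}/\lfloor n/w\rfloor$ and $p:=r/g$ are both integers. Suppose that there exists a $g^{*}$-good almost-regular edge-coloring of $K_n^w$ and that there exists an orthogonal array $\mathrm{OA}(w,2w-1,g)$. Then there exists a $\mathrm{TOC}_q(n,2w-1,w)$, where $q=g+1$.
   Context: $\mathcal{H}_q(n,w)$ is the set of all words of length $n$ over $\mathbb{Z}_q$ with exactly $w$ nonzero entries, with the Hamming distance. An $(n,d,w)_q$-code is a nonempty subset of $\mathcal{H}_q(n,w)$ with pairwise Hamming distances at least $d$; $A_q(n,d,w)$ is the maximum size of such a code and a code of this size is optimal. A $\mathrm{TOC}_q(n,d,w)$ is a partition of $\mathcal{H}_q(n,w)$ into optimal $(n,d,w)_q$-codes. $K_n^w$ is the complete $w$-uniform hypergraph on $[n]$. A sub-hypergraph with vertex set $[n]$ is almost-regular if any two vertex degrees differ by at most one. An almost-regular edge-coloring $\{\mathcal{F}_{i,j}:1\le i\le r/g,\,1\le j\le g\}$ of $K_n^w$ is a partition of its edges into classes, each an almost-regular sub-hypergraph on $[n]$ with exactly $\lfloor n/w\rfloor$ edges. It is $g$-good if each $\mathcal{A}_i=\bigcup_{j=1}^g\mathcal{F}_{i,j}$ is the block set of a packing $\mathrm{P}(2,w,n)$ (every pair of points in at most one edge of $\mathcal{A}_i$), and $g^{*}$-good if moreover, for each $i$, the vertex set $[n]$ can be partitioned into $w$ classes so that every edge of $\mathcal{A}_i$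 meets each class in at most one vertex (a strong $w$-coloring). An orthogonal array $\mathrm{OA}(t,k,s)$ is an $s^t\times k$ array over an $s$-symbol alphabet such that in every choice of $t$ columns each ordered $t$-tuple of symbols appears in exactly one row. *)

(* Defs.v *)
From mathcomp Require Import all_boot.
Set Implicit Arguments. Unset Strict Implicit. Unset Printing Implicit Defensive.

(* Words of length n over Z_q, represented with symbols 'I_q (0 = zero symbol). *)
Definition word (q n : nat) := {ffun 'I_n -> 'I_q}.

Definition wsupp (q n : nat) (x : word q n) : {set 'I_n} :=
  [set i | nat_of_ord (x i) != 0%N].

Definition Hqnw (q n w : nat) : {set word q n} := [set x | #|wsupp x| == w].

Definition hdist (q n : nat) (x y : word q n) : nat := #|[set i | x i != y i]|.

Definition is_code (q n d w : nat) (C : {set word q n}) : bool :=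
  [&& C \subset Hqnw q n w, C != set0 &
      [forall x in C, forall y in C, (x != y) ==> (d <= hdist x y)]].

Definition Aq (q n d w : nat) : nat :=
  \max_(C : {set word q n} | is_code d w C) #|C|.

Definition optimal_code (q n d w : nat) (C : {set word q n}) : bool :=
  is_code d w C && (#|C| == Aq q n d w).

Definition TOC (q n d w : nat) : Prop :=
  exists P : {set {set word q n}},
    partition P (Hqnw q n w) /\ forall C, C \in P -> optimal_code d w C.

Definition Knw_edge (n w : nat) (e : {set 'I_n}) : bool := #|e| == w.

Definition hdeg (n : nat) (F : {set {set 'I_n}}) (v : 'I_n) : nat :=
  #|[set e in F | v \in e]|.

Definition almost_regular (n : nat) (F : {set {set 'I_n}}) : Prop :=
  forall u v : 'I_n, hdeg F u <= (hdeg F v).+1.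

(* almost-regular edge-coloring {F_{i,j} : i < r/g, j < g} of K_n^w *)
Definition ar_edge_coloring (n w p g : nat) (F : 'I_p -> 'I_g -> {set {set 'I_n}})
  : Prop :=
  (forall i j e, e \in F i j -> Knw_edge w e) /\
  (forall e : {set 'I_n}, Knw_edge w e ->
     exists! ij : 'I_p * 'I_g, e \in F ij.1 ij.2) /\
  (forall i j, almost_regular (F i j)) /\
  (forall i j, #|F i j| = n %/ w).

Definition Ablock (n p g : nat) (F : 'I_p -> 'I_g -> {set {set 'I_n}}) (i : 'I_p)
  : {set {set 'I_n}} := \bigcup_(j < g) F i j.

Definition is_packing (n : nat) (A : {set {set 'I_n}}) : Prop :=
  forall x y : 'I_n, x != y -> #|[set e in A | (x \in e) && (y \in e)]| <= 1.

Definition g_good (n w p g : nat) (F : 'I_p -> 'I_g -> {set {set 'I_n}}) : Prop :=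
  @ar_edge_coloring n w p g F /\ forall i, is_packing (Ablock F i).

(* strong w-coloring: partition of [n] into w classes (given by c) such that
   every edge meets each class in at most one vertex *)
Definition gstar_good (n w p g : nat) (F : 'I_p -> 'I_g -> {set {set 'I_n}}) : Prop :=
  @g_good n w p g F /\
  forall i, exists c : 'I_n -> 'I_w,
    forall e, e \in Ablock F i -> forall k : 'I_w, #|[set v in e | c v == k]| <= 1.

Definition is_OA (t k s : nat) (M : 'I_(s ^ t) -> 'I_k -> 'I_s) : Prop :=
  forall c : 'I_t -> 'I_k, injective c ->
    forall u : 'I_t -> 'I_s, exists! rho : 'I_(s ^ t), forall l, M rho (c l) = u l.

Definition OA_exists (t k s : nat) : Prop :=
  exists M : 'I_(s ^ t) -> 'I_k -> 'I_s, is_OA M.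

(* Main.v *)
Require Import Defs.
From mathcomp Require Import all_boot zify.

Lemma dcount (T U : finType) (A : {set T}) (R : T -> U -> bool) :
  \sum_(a in A) #|[set b | R a b]| = \sum_b #|[set a in A | R a b]|.
Proof.
under eq_bigr => a _ do rewrite -sum1dep_card.
under [RHS]eq_bigr => b _ do rewrite -sum1dep_card.
by rewrite (exchange_big_dep xpredT).
Qed.


Lemma two_in (T : finType) (S : {set T}) a b :
  a \in S -> b \in S -> a != b -> 1 < #|S|.
Proof.
move=> Ha Hb Hab; have := cards2 a b; rewrite Hab => <-.
apply: subset_leq_card; apply/subsetP => x; rewrite !inE.
by case/orP => /eqP ->.
Qed.

Lemma setmemE (T : finType) (A : {set T}) : [set x | x \in A] = A.
Proof. by apply/setP => x; rewrite inE. Qed.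

Lemma code_coord (q n w : nat) (C : {set word q n}) (i : 'I_n) :
  0 < w -> is_code (2*w-1) w C -> #|[set x in C | i \in wsupp x]| <= q.-1.
Proof.
move=> w0 /and3P [HH _ /forallP Hd].
case: (set_0Vmem [set x in C | i \in wsupp x]) => [-> | [x0 _]]; first by rewrite cards0.
have q0 : 0 < q by case: (x0 i) => k kq; apply: leq_ltn_trans kq.
set S := [set x in C | i \in wsupp x].
rewrite -(card_in_imset (f := fun x : word q n => x i)); last first.
  move=> x y; rewrite !inE => /andP [xC xi] /andP [yC yi] Exy.
  apply/eqP; apply: contraT => nxy.
  have := Hd x; rewrite xC => /forallP /(_ y); rewrite yC nxy /= => Hxy.
  have Hx : #|wsupp x| = w by move/subsetP: HH => /(_ x xC); rewrite inE => /eqP.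
  have Hy : #|wsupp y| = w by move/subsetP: HH => /(_ y yC); rewrite inE => /eqP.
  have Hsub : [set k | x k != y k] \subset (wsupp x :|: wsupp y) :\ i.
    apply/subsetP => k; rewrite !inE => nk.
    apply/andP; split.
      by apply: contraNneq nk => ->; rewrite Exy.
    apply: contraTT nk; rewrite negb_or !negbK => /andP [/eqP a /eqP b].
    by apply/eqP/val_inj; rewrite /= a b.
  have : hdist x y <= #|(wsupp x :|: wsupp y) :\ i| by apply: subset_leq_card.
  have iI : i \in wsupp x :&: wsupp y by rewrite !inE xi yi.
  have iU : i \in wsupp x :|: wsupp y by rewrite !inE xi.
  have h3 : #|wsupp x :|: wsupp y| = #|(wsupp x :|: wsupp y) :\ i|.+1 by rewrite (cardsD1 i) iU.
  have h2 : #|wsupp x :|: wsupp y| + #|wsupp x :&: wsupp y| = w + w by rewrite cardsUI Hx Hy.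
  have h1 : 0 < #|wsupp x :&: wsupp y| by apply/card_gt0P; exists i.
  move=> h4. lia.
have Hsub : (fun x : word q n => x i) @: S \subset [set k : 'I_q | val k != 0].
  apply/subsetP => k /imsetP [x]; rewrite !inE => /andP [_ xi] ->; exact xi.
apply: leq_trans (subset_leq_card Hsub) _.
have : [set k : 'I_q | val k != 0] \proper [set: 'I_q].
  apply/properP; split; first exact: subsetT.
  by exists (Ordinal q0); rewrite !inE.
move/proper_card; rewrite cardsT card_ord.
by move=> h; rewrite -ltnS prednK.
Qed.

Lemma code_card q n w (C : {set word q n}) :
  0 < w -> is_code (2*w-1) w C -> #|C| * w <= n * q.-1.
Proof.
move=> w0 HC; have /and3P [HH _ _] := HC.
have E : #|C| * w = \sum_(x in C) #|[set i | i \in wsupp x]|.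
  rewrite -sum_nat_const; apply: eq_bigr => x xC; rewrite setmemE.
  by move/subsetP: HH => /(_ x xC); rewrite inE => /eqP.
rewrite E dcount.
apply: (@leq_trans (\sum_(b < n) q.-1)).
  apply: leq_sum => i _; exact (@code_coord q n w C i w0 HC).
by rewrite big_const_ord iter_addn_0 mulnC.
Qed.

Lemma Aq_bound n w g :
  0 < w -> g * (n %% w) < w -> Aq g.+1 n (2*w-1) w <= g * (n %/ w).
Proof.
move=> w0 ga; apply/bigmax_leqP => C HC.
have := @code_card _ _ w C w0 HC; rewrite /=.
have := divn_eq n w.
move: (n %/ w) (n %% w) ga (#|C|) => N a ga c E h.
nia.
Qed.

Lemma deg_le1 n w (F0 : {set {set 'I_n}}) :
  (forall e, e \in F0 -> #|e| = w) -> almost_regular F0 -> #|F0| = n %/ w ->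
  forall v, hdeg F0 v <= 1.
Proof.
move=> HK HR HC v0; rewrite leqNgt; apply/negP => H2.
have S : \sum_v hdeg F0 v = #|F0| * w.
  have := @dcount _ _ F0 (fun e (v : 'I_n) => v \in e); rewrite /hdeg /= => <-.
  rewrite -sum_nat_const; apply: eq_bigr => e eF; by rewrite setmemE HK.
have L : n.+1 <= \sum_v hdeg F0 v.
  apply: (@leq_trans (\sum_(v : 'I_n) (1 + (v == v0)))).
    rewrite big_split /= sum1_card card_ord (bigD1 v0) //= eqxx big1 ?addn0 ?addn1 //.
    by move=> v /negbTE ->.
  apply: leq_sum => v _; case: eqP => [-> | _]; first by rewrite addn1.
  have := HR v0 v; rewrite addn0; lia.
have := leq_trunc_div n w; rewrite -HC -S; lia.
Qed.

Lemma matching n w (F0 : {set {set 'I_n}}) :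
  (forall e, e \in F0 -> #|e| = w) -> almost_regular F0 -> #|F0| = n %/ w ->
  forall e e' v, e \in F0 -> e' \in F0 -> v \in e -> v \in e' -> e = e'.
Proof.
move=> HK HR HC e e' v eF e'F ve ve'; apply/eqP; apply: contraT => ne.
have := @deg_le1 n w F0 HK HR HC v; rewrite leqNgt (@two_in _ _ e e') //; by rewrite !inE ?eF ?e'F ?ve ?ve'.
Qed.

Lemma pack_inter n (A : {set {set 'I_n}}) e e' :
  is_packing A -> e \in A -> e' \in A -> e != e' -> #|e :&: e'| <= 1.
Proof.
move=> HP eA e'A ne.
case: (set_0Vmem (e :&: e')) => [-> | [x Hx]]; first by rewrite cards0.
rewrite -(cards1 x); apply: subset_leq_card; apply/subsetP => y Hy; rewrite inE.
apply: contraT => nyx.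
move: Hx Hy; rewrite !inE => /andP [xe xe'] /andP [ye ye'].
have := HP y x nyx; rewrite leqNgt (@two_in _ _ e e') //; by rewrite !inE ?eA ?e'A ?xe ?xe' ?ye ?ye'.
Qed.

Lemma color_inj n w (c : 'I_n -> 'I_w) (e : {set 'I_n}) :
  (forall k, #|[set v in e | c v == k]| <= 1) -> {in e &, injective c}.
Proof.
move=> H v v' ve v'e E; apply/eqP; apply: contraT => nv.
have := H (c v); rewrite leqNgt (@two_in _ _ v v') //; by rewrite !inE ?ve ?v'e ?E eqxx.
Qed.

Lemma color_surj n w (c : 'I_n -> 'I_w) (e : {set 'I_n}) :
  (forall k, #|[set v in e | c v == k]| <= 1) -> #|e| = w ->
  forall k, exists2 v, v \in e & c v = k.
Proof.
move=> H ew k.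
have E : c @: e = setT.
  apply/eqP; rewrite eqEcard subsetT cardsT card_ord card_in_imset ?ew //.
    by rewrite leqnn.
  exact: (@color_inj n w c e H).
have : k \in c @: e by rewrite E inE.
by case/imsetP => v ve ->; exists v.
Qed.

Definition Wd (g n w : nat) (c : 'I_n -> 'I_w) (u : {ffun 'I_w -> 'I_g})
  (e : {set 'I_n}) (j : 'I_g) : word g.+1 n :=
  [ffun v => if v \in e then inord ((u (c v) + j) %% g).+1 else ord0].
Arguments Wd {g n w} c u e j.

Lemma Wd_val (g n w : nat) (c : 'I_n -> 'I_w) (u : {ffun 'I_w -> 'I_g})
  (e : {set 'I_n}) (j : 'I_g) v :
  nat_of_ord (Wd c u e j v) = if v \in e then ((u (c v) + j) %% g).+1 else 0.
Proof.
rewrite ffunE; case: ifP => // _; rewrite inordK // ltnS ltn_pmod //.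
exact: leq_ltn_trans (leq0n j) (ltn_ord j).
Qed.

Lemma Wd_supp (g n w : nat) (c : 'I_n -> 'I_w) (u : {ffun 'I_w -> 'I_g})
  (e : {set 'I_n}) (j : 'I_g) : wsupp (Wd c u e j) = e.
Proof. by apply/setP => v; rewrite inE Wd_val; case: (v \in e). Qed.
Arguments Wd_supp {g n w} c u e j.

Lemma Wd_neq (g n w : nat) (c : 'I_n -> 'I_w) (u : {ffun 'I_w -> 'I_g})
  (e e' : {set 'I_n}) (j j' : 'I_g) v :
  v \in e :|: e' -> (v \in e -> v \in e' -> j != j') ->
  Wd c u e j v != Wd c u e' j' v.
Proof.
rewrite inE => H hj; apply/negP => /eqP /(congr1 val); rewrite /= !Wd_val.
case ve: (v \in e); case ve': (v \in e') => //=; last by rewrite ve ve' in H.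
move/succn_inj/eqP; rewrite eqn_modDl !modn_small // => ejj.
by move: (hj ve ve'); rewrite -val_eqE /= ejj.
Qed.

Theorem theorem3p4 (w n g : nat) :
  0 < w -> 0 < n -> 0 < g -> w <= n ->
  g * (n %% w) < w ->
  (n %/ w) %| 'C(n, w) ->
  g %| ('C(n, w) %/ (n %/ w)) ->
  (exists F : 'I_(('C(n, w) %/ (n %/ w)) %/ g) -> 'I_g -> {set {set 'I_n}},
      @gstar_good n w _ g F) ->
  OA_exists w (2 * w - 1) g ->
  TOC g.+1 n (2 * w - 1) w.
Proof.
move=> w0 n0 g0 wn ga _ _ [F HF] _; move: F HF.
move: (_ %/ g) => p F [[[HK [HU [HR HC]]] HP] Hc].
have [c Hc'] := fin_all_exists Hc.
have HKe : forall i j e, e \in F i j -> #|e| = w by move=> i j e /HK /eqP.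
have Huniq : forall i j i' j' e, e \in F i j -> e \in F i' j' -> i = i' /\ j = j'.
  move=> i j i' j' e h h'.
  have [ij [_ Hu]] := HU e (HK _ _ _ h).
  have E1 := Hu (i, j) h; have E2 := Hu (i', j') h'.
  have : (i, j) = (i', j') by rewrite -E1 -E2.
  by case=> -> ->.
have Hab : forall i j e, e \in F i j -> e \in Ablock F i.
  by move=> i j e h; apply/bigcupP; exists j.
have Hmatch : forall i j e e' v, e \in F i j -> e' \in F i j -> v \in e -> v \in e' -> e = e'.
  move=> i j; exact: (@matching n w (F i j) (HKe i j) (HR i j) (HC i j)).
have Hpk : forall i j j' e e', e \in F i j -> e' \in F i j' -> e != e' -> #|e :&: e'| <= 1.
  move=> i j j' e e' h h'; apply: (@pack_inter n (Ablock F i) e e' (HP i)); [exact: Hab h | exact: Hab h'].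
pose S i := [set ej : 'I_g * {set 'I_n} | ej.2 \in F i ej.1].
pose Cd i u : {set word g.+1 n} := [set Wd (c i) u ej.2 ej.1 | ej in S i].
pose P := [set Cd iu.1 iu.2 | iu in [set: 'I_p * {ffun 'I_w -> 'I_g}]].
have Hcode : forall i u, is_code (2*w-1) w (Cd i u).
  move=> i u; apply/and3P; split.
  - apply/subsetP => x /imsetP [[j e]]; rewrite inE /= => eF ->.
    by rewrite inE Wd_supp (HKe _ _ _ eF).
  - apply/set0Pn.
    have : 0 < #|F i (Ordinal g0)| by rewrite HC divn_gt0.
    case/card_gt0P => e eF.
    exists (Wd (c i) u e (Ordinal g0)); apply/imsetP; exists (Ordinal g0, e) => //.
    by rewrite inE.
  - apply/forallP => x; apply/implyP => /imsetP [[j e]]; rewrite inE /= => eF ->.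
    apply/forallP => y; apply/implyP => /imsetP [[j' e']]; rewrite inE /= => e'F ->.
    apply/implyP => nxy.
    case: (eqVneq e e') => [Ee | ne].
      subst e'; have [_ Ej] := Huniq _ _ _ _ _ eF e'F; subst j'.
      by rewrite eqxx in nxy.
    have h1 := Hpk _ _ _ _ _ eF e'F ne.
    have h3 : #|e :|: e'| <= hdist (Wd (c i) u e j) (Wd (c i) u e' j').
      apply: subset_leq_card; apply/subsetP => v vU; rewrite inE.
      apply: Wd_neq => // ve ve'; apply: contra_neq ne => Ej; subst j'.
      exact: Hmatch eF e'F ve ve'.
    have h2 : #|e :|: e'| + #|e :&: e'| = w + w.
      by rewrite cardsUI (HKe _ _ _ eF) (HKe _ _ _ e'F).
    lia.
have Hcard : forall i u, #|Cd i u| = g * (n %/ w).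
  move=> i u; rewrite card_in_imset.
    rewrite /S -sum1dep_card.
    rewrite -(pair_big_dep xpredT (fun j e => e \in F i j) (fun _ _ => 1)) /=.
    under eq_bigr => j _ do rewrite sum1_card HC.
    by rewrite big_const_ord iter_addn_0 mulnC.
  move=> [j e] [j' e']; rewrite !inE /= => eF e'F E.
  have Ee : e = e' by rewrite -(Wd_supp (c i) u e j) E Wd_supp.
  subst e'; by have [_ ->] := Huniq _ _ _ _ _ eF e'F.
have Hopt : forall i u, optimal_code (2*w-1) w (Cd i u).
  move=> i u; rewrite /optimal_code Hcode /= eqn_leq; apply/andP; split.
    rewrite /Aq; apply: (@leq_bigmax_cond _ (fun C : {set word g.+1 n} => is_code (2*w-1) w C) (fun C => #|C|)); exact: Hcode.
  by rewrite Hcard; exact: Aq_bound.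
exists P; split; last by move=> C /imsetP [[i u] _ ->]; exact: Hopt.
apply/and3P; split.
- apply/eqP/setP => x; apply/bigcupP/idP.
    case=> C /imsetP [[i u] _ ->] xC.
    by have /and3P [H _ _] := Hcode i u; exact: (subsetP H).
  move=> xH.
  have ew : #|wsupp x| = w by move: xH; rewrite inE => /eqP.
  have [[i j] [eF _]] := HU (wsupp x) (introT eqP ew).
  rewrite /= in eF.
  pose u := [ffun k => match [pick v in wsupp x | c i v == k] with
                       | Some v => Ordinal (ltn_pmod ((x v).-1 + (g - j)) g0)
                       | None => Ordinal g0 end] : {ffun 'I_w -> 'I_g}.
  exists (Cd i u); first by apply/imsetP; exists (i, u); rewrite ?inE.
  apply/imsetP; exists (j, wsupp x); first by rewrite inE.
  apply/ffunP => v; apply: val_inj; rewrite /= Wd_val.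
  case: ifP => vx.
    rewrite ffunE; case: pickP => [v' /andP [v'x /eqP cv] | /(_ v)]; last by rewrite vx eqxx.
    have Hinj := @color_inj _ _ (c i) (wsupp x) (Hc' i (wsupp x) (Hab _ _ _ eF)).
    have Ev := Hinj v' v v'x vx cv; subst v'.
    rewrite /= modnDml -addnA subnK ?(ltnW (ltn_ord j)) // modnDr modn_small.
      by rewrite prednK // lt0n; move: vx; rewrite inE.
    by move: vx; rewrite inE -lt0n => vx; rewrite -ltnS prednK.
  by move: vx; rewrite inE => /negbFE/eqP.
- apply/trivIsetP => A B /imsetP [[i u] _ ->] /imsetP [[i' u'] _ ->] nAB.
  apply/pred0P => x /=; apply/negbTE/negP => /andP [hx hx'].
  move/negP: nAB; apply.
  move: hx hx' => /imsetP [[j e]]; rewrite inE /= => eF -> /imsetP [[j' e']].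
  rewrite inE /= => e'F E.
  have Ee : e = e' by rewrite -(Wd_supp (c i) u e j) E Wd_supp.
  subst e'; have [Ei Ej] := Huniq _ _ _ _ _ eF e'F; subst i' j'.
  suff -> : u = u' by rewrite eqxx.
  apply/ffunP => k.
  have [v ve cv] := @color_surj _ _ (c i) e (Hc' i e (Hab _ _ _ eF)) (HKe _ _ _ eF) k.
  have := congr1 (fun f : word g.+1 n => nat_of_ord (f v)) E; rewrite /= !Wd_val ve cv.
  move/succn_inj/eqP; rewrite eqn_modDr !modn_small // => /eqP; exact: val_inj.
- apply/negP => /imsetP [[i u] _ E].
  by have /and3P [_ H _] := Hcode i u; rewrite -E eqxx in H.
Qed.
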